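(* Let $\mathfrak{O}$ be a domain in the $(\varpi,z)$ half-plane on which $(\partial_\varpi\Pi)^2+(\partial_z\Pi)^2\neq0$, and suppose $\mathfrak{O}=\mathfrak{O}_1\cup\mathfrak{O}_2$ where $\Omega$ is constant on the domain $\mathfrak{O}_1$ and $\rho=P=0$ on the domain $\mathfrak{O}_2$. Let $K$ be arbitrarily given and let $F,A,\Pi$ satisfy, for $\rho$, $\Omega$ and this $K$, (a) $\Delta F+\frac1\Pi(\partial_\varpi\Pi\,\partial_\varpi F+\partial_z\Pi\,\partial_zF)+\frac{e^{4F}}{2\Pi^2}[(\partial_\varpi A)^2+(\partial_zA)^2]=\frac{4\pi\mathsf{G}}{\mathsf{c}^4}e^{2(-F+K)}\Big[(\epsilon+P)\frac{e^{2F}(1+\frac{\Omega}{\mathsf{c}}A)^2+e^{-2F}\frac{\Omega^2}{\mathsf{c}^2}\Pi^2}{\mathcal{D}}+2P\Big]$; (b) $\Delta A-\frac1\Pi(\partial_\varpi\Pi\,\partial_\varpi A+\partial_z\Pi\,\partial_zA)+4(\partial_\varpi F\,\partial_\varpi A+\partial_zF\,\partial_zA)=-\frac{16\pi\mathsf{G}}{\mathsf{c}^4}e^{2(-F+K)}(\epsilon+P)\frac{e^{-2F}\frac{\Omega}{\mathsf{c}}\Pi^2(1+\frac{\Omega}{\mathsf{c}}A)}{\mathcal{D}}$; (c) $\Delta\Pi=\frac{16\pi\mathsf{G}}{\mathsf{c}^4}e^{2(-F+K)}P\Pi$; (f) $\frac12\log\mathcal{D}=-\frac{u}{\mathsf{c}^2}+\text{Const.}$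 while $\rho>0$. Let $\tilde K_1,\tilde K_3$ be evaluated by these $F,A,\Pi$ (see context). Then on $\mathfrak{O}$ $$\partial_z\tilde K_1-\partial_\varpi\tilde K_3=\frac{16\pi\mathsf{G}}{\mathsf{c}^4}e^{2(-F+K)}P\Pi\big[(\partial_\varpi\Pi)^2+(\partial_z\Pi)^2\big]^{-1}\Big[(\partial_\varpi K-\tilde K_1)\partial_z\Pi-(\partial_zK-\tilde K_3)\partial_\varpi\Pi\Big].$$
   Context: $\mathsf{c},\mathsf{G}>0$ constants; $\Delta=\partial_\varpi^2+\partial_z^2$. $\rho\ge0$ and $\Omega$ are functions of $(\varpi,z)$; $P=P(\rho)$ is a $C^1$ function of $\rho\ge0$, $\epsilon=\mathsf{c}^2\rho$, $u=\int_0^\rho dP/(\rho+P/\mathsf{c}^2)$. $\mathcal{D}=e^{2F}(1+\frac{\Omega}{\mathsf{c}}A)^2-e^{-2F}\frac{\Omega^2}{\mathsf{c}^2}\Pi^2$, assumed positive. Define $\mathcal{R}_d=\frac12(\partial_\varpi^2\Pi-\partial_z^2\Pi)+\Pi[(\partial_\varpi F)^2-(\partial_zF)^2]-\frac{e^{4F}}{4\Pi}[(\partial_\varpi A)^2-(\partial_zA)^2]$, $\mathcal{R}_e=\partial_\varpi\partial_z\Pi+2\Pi\,\partial_\varpi F\,\partial_zF-\frac{e^{4F}}{2\Pi}\partial_\varpi A\,\partial_zA$, $\tilde K_1=((\partial_\varpi\Pi)^2+(\partial_z\Pi)^2)^{-1}[\partial_\varpi\Pi\,\mathcal{R}_d+\partial_z\Pi\,\mathcal{R}_e]$,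 $\tilde K_3=((\partial_\varpi\Pi)^2+(\partial_z\Pi)^2)^{-1}[-\partial_z\Pi\,\mathcal{R}_d+\partial_\varpi\Pi\,\mathcal{R}_e]$. *)

(* Defs.v *)
From Stdlib Require Import Reals.
From Coquelicot Require Import Coquelicot.
Open Scope R_scope.

(* Points of the (varpi, z) plane are pairs (w, z) : R * R.
   Fields are functions f : R -> R -> R,  f w z. *)

Definition dw (f : R -> R -> R) : R -> R -> R :=
  fun w z => Derive (fun x => f x z) w.
Definition dz (f : R -> R -> R) : R -> R -> R :=
  fun w z => Derive (fun y => f w y) z.
Definition Lap (f : R -> R -> R) : R -> R -> R :=
  fun w z => dw (dw f) w z + dz (dz f) w z.

Definition open_set (O : R -> R -> Prop) : Prop :=
  forall w z, O w z -> exists e, 0 < e /\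
    forall w' z', Rabs (w' - w) < e -> Rabs (z' - z) < e -> O w' z'.

Definition connected_set (O : R -> R -> Prop) : Prop :=
  forall U V : R -> R -> Prop, open_set U -> open_set V ->
    (forall w z, O w z -> U w z \/ V w z) ->
    (forall w z, O w z -> U w z -> V w z -> False) ->
    (forall w z, O w z -> U w z) \/ (forall w z, O w z -> V w z).

Definition plane_domain (O : R -> R -> Prop) : Prop :=
  (exists w z, O w z) /\ open_set O /\ connected_set O.

Definition half_plane_domain (O : R -> R -> Prop) : Prop :=
  plane_domain O /\ forall w z, O w z -> 0 < w.

Definition cont_at (f : R -> R -> R) (w z : R) : Prop :=
  continuous (fun p : R * R => f (fst p) (snd p)) (w, z).

Fixpoint Ck (k : nat) (D : R -> R -> Prop) (f : R -> R -> R) : Prop :=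
  match k with
  | 0%nat => forall w z, D w z -> cont_at f w z
  | S k' =>
      (forall w z, D w z ->
         ex_derive (fun x => f x z) w /\ ex_derive (fun y => f w y) z) /\
      Ck k' D f /\ Ck k' D (dw f) /\ Ck k' D (dz f)
  end.

Section Fields.
Variables (c : R) (F A Pi Om : R -> R -> R).

Definition calD (w z : R) : R :=
  exp (2 * F w z) * (1 + Om w z / c * A w z) ^ 2
  - exp (- (2 * F w z)) * (Om w z ^ 2 / c ^ 2) * Pi w z ^ 2.

Definition Rd (w z : R) : R :=
  / 2 * (dw (dw Pi) w z - dz (dz Pi) w z)
  + Pi w z * (dw F w z ^ 2 - dz F w z ^ 2)
  - exp (4 * F w z) / (4 * Pi w z) * (dw A w z ^ 2 - dz A w z ^ 2).

Definition Re (w z : R) : R :=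
  dz (dw Pi) w z
  + 2 * Pi w z * dw F w z * dz F w z
  - exp (4 * F w z) / (2 * Pi w z) * dw A w z * dz A w z.

Definition gradPi2 (w z : R) : R := dw Pi w z ^ 2 + dz Pi w z ^ 2.

Definition K1t (w z : R) : R :=
  / gradPi2 w z * (dw Pi w z * Rd w z + dz Pi w z * Re w z).

Definition K3t (w z : R) : R :=
  / gradPi2 w z * (- dz Pi w z * Rd w z + dw Pi w z * Re w z).

End Fields.

(* Main.v *)
Require Import Defs.
From Stdlib Require Import Reals Lra.
From Coquelicot Require Import Coquelicot.
Open Scope R_scope.

Ltac etafix := repeat match goal with |- context [fun x : R => ?g x] => change (fun x : R => g x) with g end.


Definition RdA p pww pzz fw fz e4 aw az :=
  / 2 * (pww - pzz) + p * (fw ^ 2 - fz ^ 2) - e4 / (4 * p) * (aw ^ 2 - az ^ 2).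
Definition ReA p pwz fw fz e4 aw az :=
  pwz + 2 * p * fw * fz - e4 / (2 * p) * aw * az.
Definition RdA' (p pww pzz fw fz e4 aw az p' pww' pzz' fw' fz' f' aw' az' : R) :=
  / 2 * (pww' - pzz') + p' * (fw ^ 2 - fz ^ 2)
     + 2 * p * (fw * fw' - fz * fz')
     - e4 * (4 * f' * p - p') / (4 * p ^ 2) * (aw ^ 2 - az ^ 2)
     - e4 / (4 * p) * (2 * (aw * aw' - az * az')).
Definition ReA' (p pwz fw fz e4 aw az p' pwz' fw' fz' f' aw' az' : R) :=
  pwz' + 2 * (p' * fw * fz + p * fw' * fz + p * fw * fz')
     - e4 * (4 * f' * p - p') / (2 * p ^ 2) * aw * az
     - e4 / (2 * p) * (aw' * az + aw * az').
Definition K1A p pw pz pww pzz pwz fw fz e4 aw az :=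
  / (pw ^ 2 + pz ^ 2) * (pw * RdA p pww pzz fw fz e4 aw az + pz * ReA p pwz fw fz e4 aw az).
Definition K3A p pw pz pww pzz pwz fw fz e4 aw az :=
  / (pw ^ 2 + pz ^ 2) * (- pz * RdA p pww pzz fw fz e4 aw az + pw * ReA p pwz fw fz e4 aw az).
Definition K1A' p pw pz pww pzz pwz fw fz e4 aw az p' pw' pz' pww' pzz' pwz' fw' fz' f' aw' az' :=
  let Rd := RdA p pww pzz fw fz e4 aw az in
  let Re := ReA p pwz fw fz e4 aw az in
  let Rd' := RdA' p pww pzz fw fz e4 aw az p' pww' pzz' fw' fz' f' aw' az' in
  let Re' := ReA' p pwz fw fz e4 aw az p' pwz' fw' fz' f' aw' az' in
  let g := pw ^ 2 + pz ^ 2 in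
  let g' := 2 * (pw * pw' + pz * pz') in
  - g' / g ^ 2 * (pw * Rd + pz * Re) + / g * (pw' * Rd + pw * Rd' + pz' * Re + pz * Re').
Definition K3A' p pw pz pww pzz pwz fw fz e4 aw az p' pw' pz' pww' pzz' pwz' fw' fz' f' aw' az' :=
  let Rd := RdA p pww pzz fw fz e4 aw az in
  let Re := ReA p pwz fw fz e4 aw az in
  let Rd' := RdA' p pww pzz fw fz e4 aw az p' pww' pzz' fw' fz' f' aw' az' in
  let Re' := ReA' p pwz fw fz e4 aw az p' pwz' fw' fz' f' aw' az' in
  let g := pw ^ 2 + pz ^ 2 in
  let g' := 2 * (pw * pw' + pz * pz') in
  - g' / g ^ 2 * (- pz * Rd + pw * Re) + / g * (- pz' * Rd - pz * Rd' + pw' * Re + pw * Re').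

Lemma main_alg (c G s e2 e4 em om a0 r Pr P1 rw rz Kw Kz
  p0 pw pz pww pwz pzz pwww pwwz pwzz pzzz fw fz fww fwz fzz aw az aww awz azz : R) :
  c <> 0 -> e2 <> 0 -> e4 = e2 ^ 2 -> em = / e2 -> p0 <> 0 -> pw ^ 2 + pz ^ 2 <> 0 ->
  let al := 1 + om / c * a0 in
  let D := e2 * al ^ 2 - em * (om ^ 2 / c ^ 2) * p0 ^ 2 in
  D <> 0 ->
  fww + fzz + / p0 * (pw * fw + pz * fz) + e4 / (2 * p0 ^ 2) * (aw ^ 2 + az ^ 2)
   = 4 * PI * G / c ^ 4 * s * ((c ^ 2 * r + Pr) * (e2 * al ^ 2 + em * (om ^ 2 / c ^ 2) * p0 ^ 2) / D + 2 * Pr) ->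
  aww + azz - / p0 * (pw * aw + pz * az) + 4 * (fw * aw + fz * az)
   = - (16 * PI * G / c ^ 4) * s * (c ^ 2 * r + Pr) * (em * (om / c) * p0 ^ 2 * al) / D ->
  pww + pzz = 16 * PI * G / c ^ 4 * s * Pr * p0 ->
  pwww + pwzz = 16 * PI * G / c ^ 4 * (s * (2 * (- fw + Kw)) * Pr * p0 + s * (P1 * rw) * p0 + s * Pr * pw) ->
  pwwz + pzzz = 16 * PI * G / c ^ 4 * (s * (2 * (- fz + Kz)) * Pr * p0 + s * (P1 * rz) * p0 + s * Pr * pz) ->
  let Dw := 2 * e2 * fw * al ^ 2 + e2 * (2 * al * (om / c * aw)) + 2 * em * fw * (om ^ 2 / c ^ 2) * p0 ^ 2
            - em * (om ^ 2 / c ^ 2) * (2 * p0 * pw) in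
  let Dz := 2 * e2 * fz * al ^ 2 + e2 * (2 * al * (om / c * az)) + 2 * em * fz * (om ^ 2 / c ^ 2) * p0 ^ 2
            - em * (om ^ 2 / c ^ 2) * (2 * p0 * pz) in
  (P1 * rw + (c ^ 2 * r + Pr) * Dw / (2 * D)) * pz - (P1 * rz + (c ^ 2 * r + Pr) * Dz / (2 * D)) * pw = 0 ->
  K1A' p0 pw pz pww pzz pwz fw fz e4 aw az pz pwz pzz pwwz pzzz pwzz fwz fzz fz awz azz
  - K3A' p0 pw pz pww pzz pwz fw fz e4 aw az pw pww pwz pwww pwzz pwwz fww fwz fw aww awz
  = 16 * PI * G / c ^ 4 * s * Pr * p0 * / (pw ^ 2 + pz ^ 2)
      * ((Kw - K1A p0 pw pz pww pzz pwz fw fz e4 aw az) * pz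
         - (Kz - K3A p0 pw pz pww pzz pwz fw fz e4 aw az) * pw).
Proof.
  intros Hc He2 He4 Hem Hp Hg al D HD Ha Hb Hcc Hcw Hcz Dw Dz HV.
  apply Rminus_diag_uniq. rewrite <- (Rmult_0_r (16 * PI * G / c ^ 4 * s * p0 / (2 * (pw ^ 2 + pz ^ 2)))).
  rewrite <- HV. clear HV.
  assert (Efzz : fzz = 4 * PI * G / c ^ 4 * s * ((c ^ 2 * r + Pr) * (e2 * al ^ 2 + em * (om ^ 2 / c ^ 2) * p0 ^ 2) / D + 2 * Pr) - fww - / p0 * (pw * fw + pz * fz) - e4 / (2 * p0 ^ 2) * (aw ^ 2 + az ^ 2)) by lra.
  assert (Eazz : azz = - (16 * PI * G / c ^ 4) * s * (c ^ 2 * r + Pr) * (em * (om / c) * p0 ^ 2 * al) / D - aww + / p0 * (pw * aw + pz * az) - 4 * (fw * aw + fz * az)) by lra.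
  assert (Epzz : pzz = 16 * PI * G / c ^ 4 * s * Pr * p0 - pww) by lra.
  assert (Epwzz : pwzz = 16 * PI * G / c ^ 4 * (s * (2 * (- fw + Kw)) * Pr * p0 + s * (P1 * rw) * p0 + s * Pr * pw) - pwww) by lra.
  assert (Epzzz : pzzz = 16 * PI * G / c ^ 4 * (s * (2 * (- fz + Kz)) * Pr * p0 + s * (P1 * rz) * p0 + s * Pr * pz) - pwwz) by lra.
  subst fzz azz pzz pwzz pzzz e4 em.
  unfold K1A', K3A', K1A, K3A, RdA, ReA, RdA', ReA', Dw, Dz.
  field. repeat split; auto.
Qed.


Definition DwA (c e2 em om a0 p0 fw aw pw : R) :=
  2 * e2 * fw * (1 + om / c * a0) ^ 2 + e2 * (2 * (1 + om / c * a0) * (om / c * aw))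
  + 2 * em * fw * (om ^ 2 / c ^ 2) * p0 ^ 2 - em * (om ^ 2 / c ^ 2) * (2 * p0 * pw).
Definition DwwA (c e2 em om a0 p0 fw aw pw fww aww pww : R) :=
  let k := om ^ 2 / c ^ 2 in let al := 1 + om / c * a0 in
  2 * (2 * fw * e2) * fw * al ^ 2 + 2 * e2 * fww * al ^ 2 + 2 * e2 * fw * (2 * al * (om / c * aw))
  + (2 * fw * e2) * (2 * al * (om / c * aw)) + e2 * (2 * (om / c * aw) * (om / c * aw))
  + e2 * (2 * al * (om / c * aww))
  + 2 * (- 2 * fw * em) * fw * k * p0 ^ 2 + 2 * em * fww * k * p0 ^ 2 + 2 * em * fw * k * (2 * p0 * pw)
  - (- 2 * fw * em) * k * (2 * p0 * pw) - em * k * (2 * (pw ^ 2 + p0 * pww)).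

Lemma sos_alg (c e2 e4 em om a0 p0 fw fz aw az pw pz fww fzz aww azz pww pzz Q : R) :
  c <> 0 -> 0 < e2 -> e4 = e2 ^ 2 -> em = / e2 -> p0 <> 0 ->
  let al := 1 + om / c * a0 in
  let D := e2 * al ^ 2 - em * (om ^ 2 / c ^ 2) * p0 ^ 2 in
  0 < D ->
  fww + fzz + / p0 * (pw * fw + pz * fz) + e4 / (2 * p0 ^ 2) * (aw ^ 2 + az ^ 2) = Q / 2 ->
  aww + azz - / p0 * (pw * aw + pz * az) + 4 * (fw * aw + fz * az) = 0 ->
  pww + pzz = Q * p0 ->
  DwA c e2 em om a0 p0 fw aw pw = 0 ->
  DwA c e2 em om a0 p0 fz az pz = 0 ->
  DwwA c e2 em om a0 p0 fw aw pw fww aww pww + DwwA c e2 em om a0 p0 fz az pz fzz azz pzz = 0 ->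
  0 <= Q.
Proof.
  intros Hc He2 He4 Hem Hp al D HD Ha Hb Hcc H1 H2 H3.
  assert (He2n : e2 <> 0) by lra.
  assert (Efzz : fzz = Q / 2 - fww - / p0 * (pw * fw + pz * fz) - e4 / (2 * p0 ^ 2) * (aw ^ 2 + az ^ 2)) by lra.
  assert (Eazz : azz = - aww + / p0 * (pw * aw + pz * az) - 4 * (fw * aw + fz * az)) by lra.
  assert (Epzz : pzz = Q * p0 - pww) by lra.
  subst fzz azz pzz e4 em.
  destruct (Req_dec om 0) as [Hom|Hom].
  - subst om. unfold D, al in HD.
    assert (E1 : forall f a p, DwA c e2 (/ e2) 0 a0 p0 f a p = 2 * e2 * f).
    { intros. unfold DwA. field; auto. }
    rewrite E1 in H1, H2.
    assert (fw = 0) by nra. assert (fz = 0) by nra. subst fw fz.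
    assert (E3 : DwwA c e2 (/ e2) 0 a0 p0 0 aw pw fww aww pww +
      DwwA c e2 (/ e2) 0 a0 p0 0 az pz (Q / 2 - fww - / p0 * (pw * 0 + pz * 0) - e2 ^ 2 / (2 * p0 ^ 2) * (aw ^ 2 + az ^ 2))
      (- aww + / p0 * (pw * aw + pz * az) - 4 * (0 * aw + 0 * az)) (Q * p0 - pww)
      = e2 * Q - e2 ^ 3 * (aw ^ 2 + az ^ 2) / p0 ^ 2).
    { unfold DwwA. field; auto. }
    rewrite E3 in H3.
    assert (Q = e2 ^ 2 * (aw ^ 2 + az ^ 2) / p0 ^ 2).
    { apply (Rmult_eq_reg_l e2); [|lra]. rewrite Rmult_comm. lra. }
    rewrite H. unfold Rdiv. apply Rmult_le_pos; [nra|]. apply Rlt_le, Rinv_0_lt_compat. nra.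
  - assert (Hk : om ^ 2 / c ^ 2 <> 0).
    { unfold Rdiv. apply Rmult_integral_contrapositive_currified. apply pow_nonzero; auto.
      apply Rinv_neq_0_compat, pow_nonzero; auto. }
    assert (E1 : forall f a p, DwA c e2 (/ e2) om a0 p0 f a p =
      2 * / e2 * (om ^ 2 / c ^ 2) * p0 *
      ((2 * e2 * f * al ^ 2 + 2 * e2 * al * (om / c) * a + 2 * / e2 * f * (om ^ 2 / c ^ 2) * p0 ^ 2)
        / (2 * / e2 * (om ^ 2 / c ^ 2) * p0) - p)).
    { intros. unfold DwA, al. field; auto. }
    assert (Hnz : 2 * / e2 * (om ^ 2 / c ^ 2) * p0 <> 0).
    { apply Rmult_integral_contrapositive_currified; [|auto]. apply Rmult_integral_contrapositive_currified; [|auto]. apply Rmult_integral_contrapositive_currified; [lra|]. apply Rinv_neq_0_compat; auto. }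
    rewrite E1 in H1, H2.
    apply Rmult_integral in H1. destruct H1 as [H1|H1]; [contradiction|].
    apply Rmult_integral in H2. destruct H2 as [H2|H2]; [contradiction|].
    apply Rminus_diag_uniq in H1. apply Rminus_diag_uniq in H2.
    subst pw pz.
    match type of H3 with ?L = 0 =>
      assert (E3 : L = Q * D - e2 ^ 2 * D / ((om / c) ^ 2 * p0 ^ 2) *
        ((2 * al * fw + om / c * aw) ^ 2 + (2 * al * fz + om / c * az) ^ 2)) end.
    { unfold DwwA, D, al. field. repeat split; auto. }
    rewrite E3 in H3.
    set (S := (2 * al * fw + om / c * aw) ^ 2 + (2 * al * fz + om / c * az) ^ 2) in *.
    assert (HQ : (Q - e2 ^ 2 / ((om / c) ^ 2 * p0 ^ 2) * S) * D = 0).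
    { rewrite <- H3. field. split; auto. }
    apply Rmult_integral in HQ. destruct HQ as [HQ|HQ]; [|lra].
    assert (HS : 0 <= S) by (unfold S; apply Rplus_le_le_0_compat; apply pow2_ge_0).
    assert (Hoc : om / c <> 0).
    { unfold Rdiv. apply Rmult_integral_contrapositive_currified; auto. apply Rinv_neq_0_compat; auto. }
    assert (Hpos : 0 < (om / c) ^ 2 * p0 ^ 2).
    { apply Rmult_lt_0_compat; rewrite <- Rsqr_pow2; apply Rsqr_pos_lt; auto. }
    assert (0 <= e2 ^ 2 / ((om / c) ^ 2 * p0 ^ 2) * S).
    { apply Rmult_le_pos; auto. unfold Rdiv. apply Rmult_le_pos. apply pow2_ge_0. left. apply Rinv_0_lt_compat. auto. }
    lra.
Qed.

Lemma dK1 (p pw pz pww pzz pwz f fw fz aw az : R -> R) (t : R) :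
  ex_derive p t -> ex_derive pw t -> ex_derive pz t -> ex_derive pww t ->
  ex_derive pzz t -> ex_derive pwz t -> ex_derive f t -> ex_derive fw t ->
  ex_derive fz t -> ex_derive aw t -> ex_derive az t ->
  p t <> 0 -> pw t ^ 2 + pz t ^ 2 <> 0 ->
  is_derive (fun s => / (pw s ^ 2 + pz s ^ 2) * (pw s *
     (/ 2 * (pww s - pzz s) + p s * (fw s ^ 2 - fz s ^ 2)
     - exp (4 * f s) / (4 * p s) * (aw s ^ 2 - az s ^ 2))
    + pz s * (pwz s + 2 * p s * fw s * fz s - exp (4 * f s) / (2 * p s) * aw s * az s))) t
   (K1A' (p t) (pw t) (pz t) (pww t) (pzz t) (pwz t) (fw t) (fz t) (exp (4 * f t)) (aw t) (az t)
     (Derive p t) (Derive pw t) (Derive pz t) (Derive pww t) (Derive pzz t) (Derive pwz t)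
     (Derive fw t) (Derive fz t) (Derive f t) (Derive aw t) (Derive az t)).
Proof.
  intros. auto_derive.
  - repeat split; auto.
  - etafix. unfold K1A', RdA, ReA, RdA', ReA'. field; auto.
Qed.

Lemma dK3 (p pw pz pww pzz pwz f fw fz aw az : R -> R) (t : R) :
  ex_derive p t -> ex_derive pw t -> ex_derive pz t -> ex_derive pww t ->
  ex_derive pzz t -> ex_derive pwz t -> ex_derive f t -> ex_derive fw t ->
  ex_derive fz t -> ex_derive aw t -> ex_derive az t ->
  p t <> 0 -> pw t ^ 2 + pz t ^ 2 <> 0 ->
  is_derive (fun s => / (pw s ^ 2 + pz s ^ 2) * (- pz s *
     (/ 2 * (pww s - pzz s) + p s * (fw s ^ 2 - fz s ^ 2)
     - exp (4 * f s) / (4 * p s) * (aw s ^ 2 - az s ^ 2))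
    + pw s * (pwz s + 2 * p s * fw s * fz s - exp (4 * f s) / (2 * p s) * aw s * az s))) t
   (K3A' (p t) (pw t) (pz t) (pww t) (pzz t) (pwz t) (fw t) (fz t) (exp (4 * f t)) (aw t) (az t)
     (Derive p t) (Derive pw t) (Derive pz t) (Derive pww t) (Derive pzz t) (Derive pwz t)
     (Derive fw t) (Derive fz t) (Derive f t) (Derive aw t) (Derive az t)).
Proof.
  intros. auto_derive.
  - repeat split; auto.
  - etafix. unfold K3A', RdA, ReA, RdA', ReA'. field; auto.
Qed.

Lemma dlnD (c om : R) (f a p : R -> R) (t : R) :
  c <> 0 -> ex_derive f t -> ex_derive a t -> ex_derive p t ->
  0 < exp (2 * f t) * (1 + om / c * a t) ^ 2 - exp (- (2 * f t)) * (om ^ 2 / c ^ 2) * p t ^ 2 ->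
  is_derive (fun s => / 2 * ln (exp (2 * f s) * (1 + om / c * a s) ^ 2 - exp (- (2 * f s)) * (om ^ 2 / c ^ 2) * p s ^ 2)) t
    (DwA c (exp (2 * f t)) (exp (- (2 * f t))) om (a t) (p t) (Derive f t) (Derive a t) (Derive p t)
     / (2 * (exp (2 * f t) * (1 + om / c * a t) ^ 2 - exp (- (2 * f t)) * (om ^ 2 / c ^ 2) * p t ^ 2))).
Proof.
  intros. auto_derive.
  - repeat split; auto.
  - etafix. unfold DwA. field. split; auto.
    replace (exp (2 * f t) * (c + om * a t) ^ 2 - exp (- (2 * f t)) * om ^ 2 * p t ^ 2) with
      (c ^ 2 * (exp (2 * f t) * (1 + om / c * a t) ^ 2 - exp (- (2 * f t)) * (om ^ 2 / c ^ 2) * p t ^ 2)) by (field; auto).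
    apply Rmult_integral_contrapositive_currified; [apply pow_nonzero; auto| lra].
Qed.

Lemma dDwA (c om : R) (f a p fw aw pw : R -> R) (t : R) :
  c <> 0 -> ex_derive f t -> ex_derive a t -> ex_derive p t ->
  ex_derive fw t -> ex_derive aw t -> ex_derive pw t ->
  Derive f t = fw t -> Derive a t = aw t -> Derive p t = pw t ->
  is_derive (fun s => DwA c (exp (2 * f s)) (exp (- (2 * f s))) om (a s) (p s) (fw s) (aw s) (pw s)) t
    (DwwA c (exp (2 * f t)) (exp (- (2 * f t))) om (a t) (p t) (fw t) (aw t) (pw t)
       (Derive fw t) (Derive aw t) (Derive pw t)).
Proof.
  intros. unfold DwA. auto_derive.
  - repeat split; auto.
  - etafix. rewrite H6, H7, H8. unfold DwwA. field; auto.
Qed.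

Lemma open_loc (O : R -> R -> Prop) w z : Defs.open_set O -> O w z -> locally_2d O w z.
Proof.
  intros HO H. destruct (HO w z H) as [e [He Hall]].
  exists (mkposreal e He). intros; apply Hall; auto.
Qed.

Lemma Ck_ex k D f w z : Ck (S k) D f -> D w z ->
  ex_derive (fun x => f x z) w /\ ex_derive (fun y => f w y) z.
Proof. intros [H _] Hd. apply H; auto. Qed.

Lemma Ck_f k D f : Ck (S k) D f -> Ck k D f.
Proof. intros [_ [H _]]. exact H. Qed.
Lemma Ck_w k D f : Ck (S k) D f -> Ck k D (dw f).
Proof. intros [_ [_ [H _]]]. exact H. Qed.
Lemma Ck_z k D f : Ck (S k) D f -> Ck k D (dz f).
Proof. intros [_ [_ [_ H]]]. exact H. Qed.

Lemma Ck_cont k D f w z : Ck k D f -> D w z -> cont_at f w z.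
Proof.
  revert f. induction k; intros f H Hd.
  - apply H; auto.
  - apply IHk; auto. apply Ck_f; auto.
Qed.

Lemma cont2d f w z : cont_at f w z -> continuity_2d_pt f w z.
Proof. intros H; apply continuity_2d_pt_filterlim; exact H. Qed.

Lemma Ck_c2d k D f w z : Ck k D f -> D w z -> continuity_2d_pt f w z.
Proof. intros; apply cont2d; eapply Ck_cont; eauto. Qed.

Lemma schwarz2 O f w z : Defs.open_set O -> Ck 2 O f -> O w z -> dw (dz f) w z = dz (dw f) w z.
Proof.
  intros HO Hf Hw.
  pose proof (Ck_w _ _ _ Hf) as Hw1. pose proof (Ck_z _ _ _ Hf) as Hz1.
  unfold dw, dz. apply Schwarz.
  - destruct (open_loc O w z HO Hw) as [d Hd]. exists d. intros u v Hu Hv.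
    specialize (Hd u v Hu Hv).
    destruct (Ck_ex _ _ _ _ _ Hf Hd) as [E1 E2].
    destruct (Ck_ex _ _ _ _ _ Hw1 Hd) as [E3 E4].
    destruct (Ck_ex _ _ _ _ _ Hz1 Hd) as [E5 E6].
    repeat split; auto.
  - apply (Ck_c2d 0 O (dw (dz f))); auto. apply Ck_w, Hz1.
  - apply (Ck_c2d 0 O (dz (dw f))); auto. apply Ck_z, Hw1.
Qed.

Definition fu (c : R) (P : R -> R) := fun s => Derive P s / (s + P s / c ^ 2).

Lemma u_chasles (c : R) (P u : R -> R) r1 r2 I :
  (forall r, 0 < r -> is_RInt_gen (fun s => Derive P s / (s + P s / c ^ 2))
                 (at_right 0) (at_point r) (u r)) ->
  0 < r1 -> 0 < r2 -> is_RInt (fu c P) r1 r2 I -> u r2 = u r1 + I.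
Proof.
  intros Hu H1 H2 HI.
  assert (A : is_RInt_gen (fu c P) (at_point r1) (at_point r2) I) by (apply is_RInt_gen_at_point; auto).
  pose proof (is_RInt_gen_Chasles (fu c P) r1 (u r1) I (Hu r1 H1) A) as B.
  pose proof (is_RInt_gen_unique _ _ B) as E1.
  pose proof (is_RInt_gen_unique _ _ (Hu r2 H2)) as E2.
  unfold fu in E1. rewrite E1 in E2. rewrite <- E2. reflexivity.
Qed.

Lemma u_flat (c : R) (P u : R -> R) r1 r2 :
  (forall r, 0 < r -> is_RInt_gen (fun s => Derive P s / (s + P s / c ^ 2))
                 (at_right 0) (at_point r) (u r)) ->
  0 < r1 -> 0 < r2 ->
  (forall s, Rmin r1 r2 < s < Rmax r1 r2 -> s + P s / c ^ 2 = 0) -> u r2 = u r1.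
Proof.
  intros Hu H1 H2 Hz.
  enough (HI : is_RInt (fu c P) r1 r2 0).
  { rewrite (u_chasles c P u r1 r2 0 Hu H1 H2 HI). ring. }
  apply is_RInt_ext with (fun _ => 0).
  - intros x Hx. unfold fu. rewrite (Hz x Hx). unfold Rdiv. rewrite Rinv_0, Rmult_0_r. reflexivity.
  - pose proof (is_RInt_const r1 r2 0) as K. match type of K with is_RInt _ _ _ ?v => replace v with 0 in K end. exact K. unfold scal; simpl; unfold mult; simpl; ring.
Qed.

Lemma cont_h (c : R) (P : R -> R) s :
  (forall r, ex_derive P r /\ continuous (Derive P) r) ->
  continuous (fun s => s + P s / c ^ 2) s.
Proof.
  intros HP. assert (H : ex_derive (fun s => s + P s / c ^ 2) s) by (auto_derive; apply HP).
  exact (ex_derive_continuous _ _ H).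
Qed.

Lemma cont_fu (c : R) (P : R -> R) s :
  (forall r, ex_derive P r /\ continuous (Derive P) r) ->
  s + P s / c ^ 2 <> 0 -> continuous (fu c P) s.
Proof.
  intros HP Hs. unfold fu.
  apply (continuous_mult (fun s => Derive P s) (fun s => / (s + P s / c ^ 2))).
  - apply HP.
  - apply continuous_Rinv_comp; auto. apply cont_h; auto.
Qed.

Lemma loc_nonzero (g : R -> R) x : continuous g x -> g x <> 0 ->
  exists d : posreal, forall y, Rabs (y - x) < d -> g y <> 0.
Proof.
  intros Hc Hx.
  assert (He : 0 < Rabs (g x)) by (apply Rabs_pos_lt; auto).
  destruct (Hc (ball (g x) (mkposreal _ He)) (locally_ball _ _)) as [d Hd].
  exists d. intros y Hy. specialize (Hd y Hy).
  change (Rabs (g y - g x) < Rabs (g x)) in Hd.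
  intro E. rewrite E in Hd. rewrite Rminus_0_l, Rabs_Ropp in Hd. lra.
Qed.

Lemma u_deriv (c : R) (P u : R -> R) r0 :
  (forall r, ex_derive P r /\ continuous (Derive P) r) ->
  (forall r, 0 < r -> is_RInt_gen (fun s => Derive P s / (s + P s / c ^ 2))
                 (at_right 0) (at_point r) (u r)) ->
  0 < r0 -> r0 + P r0 / c ^ 2 <> 0 -> is_derive u r0 (fu c P r0).
Proof.
  intros HP Hu Hr0 Hh.
  destruct (loc_nonzero (fun s => s + P s / c ^ 2) r0 (cont_h c P r0 HP) Hh) as [d1 Hd1].
  assert (Hdp : 0 < Rmin d1 (r0 / 2)) by (apply Rmin_glb_lt; [apply cond_pos|lra]).
  set (d := mkposreal _ Hdp).
  assert (Hin : forall y, Rabs (y - r0) < d -> 0 < y /\ y + P y / c ^ 2 <> 0).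
  { intros y Hy. simpl in Hy. split.
    - assert (Rabs (y - r0) < r0 / 2) by (eapply Rlt_le_trans; [exact Hy| apply Rmin_r]).
      apply Rabs_def2 in H. lra.
    - apply Hd1. eapply Rlt_le_trans; [exact Hy| apply Rmin_l]. }
  assert (HR : forall b, Rabs (b - r0) < d -> is_RInt (fu c P) r0 b (RInt (fu c P) r0 b)).
  { intros b Hb. apply (RInt_correct (V := R_CompleteNormedModule)), (ex_RInt_continuous (V := R_CompleteNormedModule)). intros z0 Hz0.
    apply cont_fu; auto. apply Hin.
    apply Rabs_def2 in Hb. destruct Hb as [Hb1 Hb2].
    unfold Rmin, Rmax in Hz0. destruct (Rle_dec r0 b); apply Rabs_def1; lra. }
  assert (Hloc : locally r0 (fun b => is_RInt (fu c P) r0 b (RInt (fu c P) r0 b))).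
  { exists d. intros y Hy. apply HR. exact Hy. }
  assert (D1 : is_derive (fun b => RInt (fu c P) r0 b) r0 (fu c P r0)).
  { apply (is_derive_RInt (fu c P) (fun b => RInt (fu c P) r0 b) r0 r0 Hloc).
    apply cont_fu; auto. }
  pose proof (is_derive_plus _ _ _ _ _ (is_derive_const (u r0) r0) D1) as D2.
  rewrite plus_zero_l in D2.
  apply is_derive_ext_loc with (fun b => u r0 + RInt (fu c P) r0 b); [|exact D2].
  exists d. intros y Hy. change (Rabs (y - r0) < d) in Hy.
  symmetry. apply u_chasles with c P; auto. apply Hin; auto.
Qed.

Lemma dU (c C : R) (P u g : R -> R) t :
  (forall r, ex_derive P r /\ continuous (Derive P) r) ->
  (forall r, 0 < r -> is_RInt_gen (fun s => Derive P s / (s + P s / c ^ 2))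
                 (at_right 0) (at_point r) (u r)) ->
  c <> 0 -> 0 < g t -> g t + P (g t) / c ^ 2 <> 0 -> ex_derive g t ->
  is_derive (fun s => - (u (g s) / c ^ 2) + C) t (- (fu c P (g t) * Derive g t) / c ^ 2).
Proof.
  intros HP Hu Hc Hg Hh Hex.
  pose proof (u_deriv c P u (g t) HP Hu Hg Hh) as Du.
  auto_derive.
  - split; auto. exists (fu c P (g t)). exact Du.
  - etafix. rewrite (is_derive_unique _ _ _ Du). field. auto.
Qed.

Lemma dir_zero (c om C : R) (P u f a p g : R -> R) t :
  (forall r, ex_derive P r /\ continuous (Derive P) r) ->
  (forall r, 0 < r -> is_RInt_gen (fun s => Derive P s / (s + P s / c ^ 2))
                 (at_right 0) (at_point r) (u r)) ->
  c <> 0 -> ex_derive f t -> ex_derive a t -> ex_derive p t -> ex_derive g t ->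
  0 < g t -> g t + P (g t) / c ^ 2 <> 0 ->
  0 < exp (2 * f t) * (1 + om / c * a t) ^ 2 - exp (- (2 * f t)) * (om ^ 2 / c ^ 2) * p t ^ 2 ->
  locally t (fun s => - (u (g s) / c ^ 2) + C =
     / 2 * ln (exp (2 * f s) * (1 + om / c * a s) ^ 2 - exp (- (2 * f s)) * (om ^ 2 / c ^ 2) * p s ^ 2)) ->
  Derive P (g t) * Derive g t + (c ^ 2 * g t + P (g t)) *
    DwA c (exp (2 * f t)) (exp (- (2 * f t))) om (a t) (p t) (Derive f t) (Derive a t) (Derive p t)
    / (2 * (exp (2 * f t) * (1 + om / c * a t) ^ 2 - exp (- (2 * f t)) * (om ^ 2 / c ^ 2) * p t ^ 2)) = 0.
Proof.
  intros HP Hu Hc Hf Ha Hp Hg Hg0 Hh HD Hloc.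
  pose proof (dU c C P u g t HP Hu Hc Hg0 Hh Hg) as D1.
  pose proof (dlnD c om f a p t Hc Hf Ha Hp HD) as D2.
  pose proof (is_derive_ext_loc _ _ _ _ Hloc D1) as D3.
  pose proof (is_derive_unique _ _ _ D2) as E2.
  pose proof (is_derive_unique _ _ _ D3) as E3.
  pose proof (eq_trans (eq_sym E2) E3) as E4. clear E2 E3. rename E4 into E3.
  set (DD := exp (2 * f t) * (1 + om / c * a t) ^ 2 - exp (- (2 * f t)) * (om ^ 2 / c ^ 2) * p t ^ 2) in *.
  set (X := DwA c (exp (2 * f t)) (exp (- (2 * f t))) om (a t) (p t) (Derive f t) (Derive a t) (Derive p t)) in *.
  assert (EX : X = 2 * DD * (- (fu c P (g t) * Derive g t) / c ^ 2)).
  { rewrite <- E3. field. lra. }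
  rewrite EX. unfold fu.
  field. split; auto. split; [|lra].
  intro E. apply Hh. replace (g t + P (g t) / c ^ 2) with ((g t * c ^ 2 + P (g t)) / c ^ 2) by (field; auto).
  rewrite E. unfold Rdiv. ring.
Qed.

Lemma loc2_and (P Q : R -> R -> Prop) w z :
  locally_2d P w z -> locally_2d Q w z -> locally_2d (fun x y => P x y /\ Q x y) w z.
Proof.
  intros [d1 H1] [d2 H2].
  assert (Hd : 0 < Rmin d1 d2) by (apply Rmin_glb_lt; apply cond_pos).
  exists (mkposreal _ Hd). simpl. intros u v Hu Hv. split.
  - apply H1; eapply Rlt_le_trans; eauto; apply Rmin_l.
  - apply H2; eapply Rlt_le_trans; eauto; apply Rmin_r.
Qed.

Lemma loc2_pos (g : R -> R -> R) w z : continuity_2d_pt g w z -> 0 < g w z ->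
  locally_2d (fun x y => 0 < g x y) w z.
Proof.
  intros Hc Hg. destruct (Hc (mkposreal _ Hg)) as [d Hd].
  exists d. intros u v Hu Hv. specialize (Hd u v Hu Hv). simpl in Hd.
  apply Rabs_def2 in Hd. lra.
Qed.

Definition Vexp (c : R) (P : R -> R) (rho F A Pi : R -> R -> R) (om w z : R) : R :=
  let M := c ^ 2 * rho w z + P (rho w z) in
  let D := exp (2 * F w z) * (1 + om / c * A w z) ^ 2 - exp (- (2 * F w z)) * (om ^ 2 / c ^ 2) * Pi w z ^ 2 in
  (Derive P (rho w z) * dw rho w z + M * DwA c (exp (2 * F w z)) (exp (- (2 * F w z))) om (A w z) (Pi w z)
      (dw F w z) (dw A w z) (dw Pi w z) / (2 * D)) * dz Pi w z
  - (Derive P (rho w z) * dz rho w z + M * DwA c (exp (2 * F w z)) (exp (- (2 * F w z))) om (A w z) (Pi w z)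
      (dz F w z) (dz A w z) (dz Pi w z) / (2 * D)) * dw Pi w z.

Lemma V_ii (c : R) (P u : R -> R) (O O1 O2 : R -> R -> Prop) (rho Om F A Pi : R -> R -> R) w z :
  0 < c ->
  (forall r, ex_derive P r /\ continuous (Derive P) r) ->
  (forall r, 0 < r -> is_RInt_gen (fun s => Derive P s / (s + P s / c ^ 2))
                 (at_right 0) (at_point r) (u r)) ->
  Defs.open_set O -> Defs.open_set O1 ->
  (forall w z, O w z <-> (O1 w z \/ O2 w z)) ->
  Ck 1 O rho -> Ck 1 O F -> Ck 1 O A -> Ck 1 O Pi ->
  (forall w z, O w z -> 0 < calD c F A Pi Om w z) ->
  (exists Om0, forall w z, O1 w z -> Om w z = Om0) ->
  (forall w z, O2 w z -> rho w z = 0 /\ P (rho w z) = 0) ->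
  (exists C, forall w z, O w z -> 0 < rho w z ->
     / 2 * ln (calD c F A Pi Om w z) = - (u (rho w z) / c ^ 2) + C) ->
  O w z -> 0 < rho w z -> rho w z + P (rho w z) / c ^ 2 <> 0 ->
  Vexp c P rho F A Pi (Om w z) w z = 0.
Proof.
  intros Hc HP Hu HO HO1 HOU Hrho HF HA HPi HD [Om0 HOm0] Hvac [C HC] Hw Hr Hh.
  assert (Hc0 : c <> 0) by lra.
  assert (H1 : O1 w z).
  { destruct (proj1 (HOU w z) Hw) as [H|H]; auto. destruct (Hvac w z H). lra. }
  assert (Hloc : locally_2d (fun x y => - (u (rho x y) / c ^ 2) + C =
     / 2 * ln (exp (2 * F x y) * (1 + Om0 / c * A x y) ^ 2 - exp (- (2 * F x y)) * (Om0 ^ 2 / c ^ 2) * Pi x y ^ 2)) w z).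
  { pose proof (loc2_and _ _ _ _ (open_loc O w z HO Hw) (open_loc O1 w z HO1 H1)) as L1.
    pose proof (loc2_and _ _ _ _ L1 (loc2_pos rho w z (Ck_c2d 1 O rho w z Hrho Hw) Hr)) as L2.
    destruct L2 as [d Hd]. exists d. intros x y Hx Hy. destruct (Hd x y Hx Hy) as [[Ha Hb] Hcc].
    specialize (HC x y Ha Hcc). unfold calD in HC. rewrite (HOm0 x y Hb) in HC. rewrite HC. reflexivity. }
  assert (HDw : 0 < exp (2 * F w z) * (1 + Om0 / c * A w z) ^ 2 - exp (- (2 * F w z)) * (Om0 ^ 2 / c ^ 2) * Pi w z ^ 2).
  { pose proof (HD w z Hw) as K. unfold calD in K. rewrite (HOm0 w z H1) in K. exact K. }
  destruct (Ck_ex _ _ _ _ _ Hrho Hw) as [Er1 Er2].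
  destruct (Ck_ex _ _ _ _ _ HF Hw) as [Ef1 Ef2].
  destruct (Ck_ex _ _ _ _ _ HA Hw) as [Ea1 Ea2].
  destruct (Ck_ex _ _ _ _ _ HPi Hw) as [Ep1 Ep2].
  assert (Ew : Derive P (rho w z) * dw rho w z + (c ^ 2 * rho w z + P (rho w z)) *
    DwA c (exp (2 * F w z)) (exp (- (2 * F w z))) Om0 (A w z) (Pi w z) (dw F w z) (dw A w z) (dw Pi w z)
    / (2 * (exp (2 * F w z) * (1 + Om0 / c * A w z) ^ 2 - exp (- (2 * F w z)) * (Om0 ^ 2 / c ^ 2) * Pi w z ^ 2)) = 0).
  { apply (dir_zero c Om0 C P u (fun x => F x z) (fun x => A x z) (fun x => Pi x z) (fun x => rho x z) w
      HP Hu Hc0 Ef1 Ea1 Ep1 Er1 Hr Hh HDw).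
    apply (locally_2d_1d_const_y _ _ _ Hloc). }
  assert (Ez : Derive P (rho w z) * dz rho w z + (c ^ 2 * rho w z + P (rho w z)) *
    DwA c (exp (2 * F w z)) (exp (- (2 * F w z))) Om0 (A w z) (Pi w z) (dz F w z) (dz A w z) (dz Pi w z)
    / (2 * (exp (2 * F w z) * (1 + Om0 / c * A w z) ^ 2 - exp (- (2 * F w z)) * (Om0 ^ 2 / c ^ 2) * Pi w z ^ 2)) = 0).
  { apply (dir_zero c Om0 C P u (fun y => F w y) (fun y => A w y) (fun y => Pi w y) (fun y => rho w y) z
      HP Hu Hc0 Ef2 Ea2 Ep2 Er2 Hr Hh HDw).
    apply (locally_2d_1d_const_x _ _ _ Hloc). }
  unfold Vexp. cbv zeta. rewrite (HOm0 w z H1). rewrite Ew, Ez. ring.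
Qed.

Lemma deriv_min (g : R -> R) t : ex_derive g t ->
  (exists eps : posreal, forall s, Rabs (s - t) < eps -> g t <= g s) -> Derive g t = 0.
Proof.
  intros Hex [eps H].
  pose (pr := ex_derive_Reals_0 g t Hex).
  rewrite <- (Derive_Reals g t pr).
  apply (deriv_minimum g (t - eps) (t + eps) t pr).
  - destruct eps; simpl; lra.
  - destruct eps; simpl; lra.
  - intros x H1 H2. apply H. apply Rabs_def1; lra.
Qed.

Lemma V_i (c : R) (P : R -> R) (O : R -> R -> Prop) (rho F A Pi : R -> R -> R) om w z :
  Defs.open_set O -> Ck 1 O rho -> (forall w z, O w z -> 0 <= rho w z) -> P 0 = 0 ->
  O w z -> rho w z = 0 -> Vexp c P rho F A Pi om w z = 0.
Proof.
  intros HO Hrho Hpos HP0 Hw Hr.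
  destruct (Ck_ex _ _ _ _ _ Hrho Hw) as [Er1 Er2].
  destruct (HO w z Hw) as [e [He Hall]].
  assert (Dw : dw rho w z = 0).
  { apply deriv_min; auto. exists (mkposreal e He). intros s Hs. rewrite Hr. apply Hpos, Hall; auto.
    rewrite Rminus_diag, Rabs_R0. exact He. }
  assert (Dz : dz rho w z = 0).
  { apply deriv_min; auto. exists (mkposreal e He). intros s Hs. rewrite Hr. apply Hpos, Hall; auto.
    rewrite Rminus_diag, Rabs_R0. exact He. }
  unfold Vexp. cbv zeta. rewrite Dw, Dz, Hr, HP0. unfold Rdiv. ring.
Qed.

Lemma line_const (c : R) (P u g : R -> R) a b :
  (forall r, 0 < r -> is_RInt_gen (fun s => Derive P s / (s + P s / c ^ 2))
                 (at_right 0) (at_point r) (u r)) ->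
  a <= b ->
  (forall t, a <= t <= b -> continuity_pt g t /\ 0 < g t /\ g t + P (g t) / c ^ 2 = 0) ->
  u (g b) = u (g a).
Proof.
  intros Hu Hab Hg.
  destruct (Hg a (conj (Rle_refl a) Hab)) as [_ [Ha _]].
  destruct (Hg b (conj Hab (Rle_refl b))) as [_ [Hb _]].
  symmetry. apply u_flat with c P; auto.
  intros s Hs. unfold Rmin, Rmax in Hs.
  destruct (Rle_dec (g b) (g a)) as [Hle|Hle].
  - assert (Hlt : a < b).
    { destruct Hab as [Hab|Hab]; auto. subst. lra. }
    destruct (Ranalysis5.IVT_interv (fun t => s - g t) a b) as [t0 [Ht0 E]]; auto.
    + intros t Ht. apply (continuity_pt_minus (fct_cte s) g). apply continuity_pt_const. intros x y; reflexivity. apply Hg; auto.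
    + lra.
    + lra.
    + replace s with (g t0) by lra. apply Hg; auto.
  - assert (Hlt : a < b).
    { destruct Hab as [Hab|Hab]; auto. subst. lra. }
    destruct (Ranalysis5.IVT_interv (fun t => g t - s) a b) as [t0 [Ht0 E]]; auto.
    + intros t Ht. apply (continuity_pt_minus g (fct_cte s)). apply Hg; auto. apply continuity_pt_const. intros x y; reflexivity.
    + lra.
    + lra.
    + replace s with (g t0) by lra. apply Hg; auto.
Qed.

Lemma c2_pow (f : R -> R -> R) n w z : continuity_2d_pt f w z ->
  continuity_2d_pt (fun u v => f u v ^ n) w z.
Proof.
  intros H. induction n.
  - apply (continuity_2d_pt_ext (fun _ _ => 1)). intros; reflexivity. apply continuity_2d_pt_const.
  - apply (continuity_2d_pt_ext (fun u v => f u v * f u v ^ n)). intros; reflexivity.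
    apply (continuity_2d_pt_mult f (fun u v => f u v ^ n)); auto.
Qed.

Lemma c2_exp (f : R -> R -> R) w z : continuity_2d_pt f w z ->
  continuity_2d_pt (fun u v => exp (f u v)) w z.
Proof.
  intros H. apply (continuity_1d_2d_pt_comp exp f); auto.
  apply derivable_continuous_pt, derivable_pt_exp.
Qed.

Ltac c2 :=
  repeat match goal with
  | |- continuity_2d_pt (fun _ _ => ?k) _ _ => apply continuity_2d_pt_const
  | |- continuity_2d_pt (fun u v => @?f u v + @?g u v) _ _ => apply (continuity_2d_pt_plus f g)
  | |- continuity_2d_pt (fun u v => @?f u v - @?g u v) _ _ => apply (continuity_2d_pt_minus f g)
  | |- continuity_2d_pt (fun u v => @?f u v * @?g u v) _ _ => apply (continuity_2d_pt_mult f g)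
  | |- continuity_2d_pt (fun u v => @?f u v / @?g u v) _ _ => unfold Rdiv
  | |- continuity_2d_pt (fun u v => - @?f u v) _ _ => apply (continuity_2d_pt_opp f)
  | |- continuity_2d_pt (fun u v => / @?f u v) _ _ => apply (continuity_2d_pt_inv f)
  | |- continuity_2d_pt (fun u v => @?f u v ^ ?n) _ _ => apply (c2_pow f n)
  | |- continuity_2d_pt (fun u v => exp (@?f u v)) _ _ => apply (c2_exp f)
  | |- continuity_2d_pt (fun _ _ => ?k) _ _ => apply continuity_2d_pt_const
  | H : continuity_2d_pt ?f ?w ?z |- continuity_2d_pt (fun u v => ?f u v) ?w ?z => exact H
  | H : continuity_2d_pt ?f ?w ?z |- continuity_2d_pt ?f ?w ?z => exact H
  end.

Lemma V0_cont (c om : R) (P : R -> R) (O : R -> R -> Prop) (rho F A Pi : R -> R -> R) w z :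
  (forall r, ex_derive P r /\ continuous (Derive P) r) ->
  Ck 1 O rho -> Ck 1 O F -> Ck 1 O A -> Ck 1 O Pi -> O w z ->
  exp (2 * F w z) * (1 + om / c * A w z) ^ 2 - exp (- (2 * F w z)) * (om ^ 2 / c ^ 2) * Pi w z ^ 2 <> 0 ->
  continuity_2d_pt (fun x y => Vexp c P rho F A Pi om x y) w z.
Proof.
  intros HP Hrho HF HA HPi Hw HD.
  assert (C1 : continuity_2d_pt rho w z) by (eapply Ck_c2d; eauto).
  assert (C2 : continuity_2d_pt (dw rho) w z) by (apply (Ck_c2d 0 O); auto; apply Ck_w; auto).
  assert (C3 : continuity_2d_pt (dz rho) w z) by (apply (Ck_c2d 0 O); auto; apply Ck_z; auto).
  assert (C4 : continuity_2d_pt F w z) by (eapply Ck_c2d; eauto).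
  assert (C5 : continuity_2d_pt (dw F) w z) by (apply (Ck_c2d 0 O); auto; apply Ck_w; auto).
  assert (C6 : continuity_2d_pt (dz F) w z) by (apply (Ck_c2d 0 O); auto; apply Ck_z; auto).
  assert (C7 : continuity_2d_pt A w z) by (eapply Ck_c2d; eauto).
  assert (C8 : continuity_2d_pt (dw A) w z) by (apply (Ck_c2d 0 O); auto; apply Ck_w; auto).
  assert (C9 : continuity_2d_pt (dz A) w z) by (apply (Ck_c2d 0 O); auto; apply Ck_z; auto).
  assert (C10 : continuity_2d_pt Pi w z) by (eapply Ck_c2d; eauto).
  assert (C11 : continuity_2d_pt (dw Pi) w z) by (apply (Ck_c2d 0 O); auto; apply Ck_w; auto).
  assert (C12 : continuity_2d_pt (dz Pi) w z) by (apply (Ck_c2d 0 O); auto; apply Ck_z; auto).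
  assert (C13 : continuity_2d_pt (fun u v => Derive P (rho u v)) w z).
  { apply (continuity_1d_2d_pt_comp (Derive P) rho); auto.
    apply continuity_pt_filterlim. apply HP. }
  assert (C14 : continuity_2d_pt (fun u v => P (rho u v)) w z).
  { apply (continuity_1d_2d_pt_comp P rho); auto.
    apply continuity_pt_filterlim. exact (ex_derive_continuous P (rho w z) (proj1 (HP (rho w z)))). }
  unfold Vexp, DwA. cbv zeta.
  c2.
  all: try (intro E; apply HD; lra).
Qed.

Lemma box_open (w z d x y : R) : Rabs (x - w) < d -> Rabs (y - z) < d ->
  locally x (fun x' => Rabs (x' - w) < d /\ Rabs (y - z) < d) /\
  locally y (fun y' => Rabs (x - w) < d /\ Rabs (y' - z) < d).
Proof.
  intros Hx Hy. split.
  - assert (He : 0 < d - Rabs (x - w)) by lra.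
    exists (mkposreal _ He). intros x' Hx'. change (Rabs (x' - x) < d - Rabs (x - w)) in Hx'. split; auto.
    replace (x' - w) with ((x' - x) + (x - w)) by ring.
    eapply Rle_lt_trans; [apply Rabs_triang|]. lra.
  - assert (He : 0 < d - Rabs (y - z)) by lra.
    exists (mkposreal _ He). intros y' Hy'. change (Rabs (y' - y) < d - Rabs (y - z)) in Hy'. split; auto.
    replace (y' - z) with ((y' - y) + (y - z)) by ring.
    eapply Rle_lt_trans; [apply Rabs_triang|]. lra.
Qed.

Lemma Rabs_between (a b t : R) : Rmin a b <= t <= Rmax a b -> Rabs (t - a) <= Rabs (b - a).
Proof.
  intros [H1 H2]. unfold Rmin, Rmax in *. destruct (Rle_dec a b).
  - rewrite !Rabs_right; lra.
  - rewrite !Rabs_left1; lra.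
Qed.

Lemma V_iii (c G : R) (P u : R -> R) (O O1 O2 : R -> R -> Prop) (rho Om K F A Pi : R -> R -> R) w z :
  0 < c -> 0 < G ->
  (forall r, ex_derive P r /\ continuous (Derive P) r) ->
  (forall r, 0 < r -> is_RInt_gen (fun s => Derive P s / (s + P s / c ^ 2))
                 (at_right 0) (at_point r) (u r)) ->
  Defs.open_set O -> Defs.open_set O1 ->
  (forall w z, O w z <-> (O1 w z \/ O2 w z)) ->
  Ck 1 O rho -> Ck 2 O F -> Ck 2 O A -> Ck 2 O Pi ->
  (forall w z, O w z -> Pi w z <> 0) ->
  (forall w z, O w z -> 0 < calD c F A Pi Om w z) ->
  (exists Om0, forall w z, O1 w z -> Om w z = Om0) ->
  (forall w z, O2 w z -> rho w z = 0 /\ P (rho w z) = 0) ->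
  (forall w z, O w z ->
     Lap F w z
     + / Pi w z * (dw Pi w z * dw F w z + dz Pi w z * dz F w z)
     + exp (4 * F w z) / (2 * Pi w z ^ 2) * (dw A w z ^ 2 + dz A w z ^ 2)
     = 4 * PI * G / c ^ 4 * exp (2 * (- F w z + K w z))
       * ((c ^ 2 * rho w z + P (rho w z))
          * (exp (2 * F w z) * (1 + Om w z / c * A w z) ^ 2
             + exp (- (2 * F w z)) * (Om w z ^ 2 / c ^ 2) * Pi w z ^ 2)
          / calD c F A Pi Om w z
          + 2 * P (rho w z))) ->
  (forall w z, O w z ->
     Lap A w z
     - / Pi w z * (dw Pi w z * dw A w z + dz Pi w z * dz A w z)
     + 4 * (dw F w z * dw A w z + dz F w z * dz A w z)
     = - (16 * PI * G / c ^ 4) * exp (2 * (- F w z + K w z))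
       * (c ^ 2 * rho w z + P (rho w z))
       * (exp (- (2 * F w z)) * (Om w z / c) * Pi w z ^ 2
          * (1 + Om w z / c * A w z))
       / calD c F A Pi Om w z) ->
  (forall w z, O w z ->
     Lap Pi w z
     = 16 * PI * G / c ^ 4 * exp (2 * (- F w z + K w z))
       * P (rho w z) * Pi w z) ->
  (exists C, forall w z, O w z -> 0 < rho w z ->
     / 2 * ln (calD c F A Pi Om w z) = - (u (rho w z) / c ^ 2) + C) ->
  O w z -> 0 < rho w z -> rho w z + P (rho w z) / c ^ 2 = 0 ->
  Vexp c P rho F A Pi (Om w z) w z = 0.
Proof.
  intros Hc HG HP Hu HO HO1 HOU Hrho HF HA HPi HPi0 HD HOm1 Hvac Ha Hb Hcc Hf Hw Hr Hh.
  assert (Hc0 : c <> 0) by lra.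
  assert (H1 : O1 w z).
  { destruct (proj1 (HOU w z) Hw) as [H|H]; auto. destruct (Hvac w z H). lra. }
  pose proof HOm1 as [Om0 HOm0]. pose proof Hf as [C HC].
  destruct (Req_dec (Vexp c P rho F A Pi (Om w z) w z) 0) as [E|NE]; [exact E|exfalso].
  rewrite (HOm0 w z H1) in NE.
  pose proof (Ck_f _ _ _ HF) as HF1. pose proof (Ck_f _ _ _ HA) as HA1. pose proof (Ck_f _ _ _ HPi) as HPi1.
  set (D0 := fun x y => exp (2 * F x y) * (1 + Om0 / c * A x y) ^ 2 - exp (- (2 * F x y)) * (Om0 ^ 2 / c ^ 2) * Pi x y ^ 2).
  assert (HD0 : forall x y, O x y -> O1 x y -> 0 < D0 x y).
  { intros x y Hx Hy. pose proof (HD x y Hx) as K0. unfold calD in K0. rewrite (HOm0 x y Hy) in K0. exact K0. }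
  assert (Hcont := V0_cont c Om0 P O rho F A Pi w z HP Hrho HF1 HA1 HPi1 Hw
    (Rgt_not_eq _ _ (HD0 w z Hw H1))).
  pose proof (continuity_2d_pt_neq_0 _ _ _ Hcont NE) as L4.
  pose proof (loc2_and _ _ _ _ (open_loc O w z HO Hw) (open_loc O1 w z HO1 H1)) as L1.
  pose proof (loc2_and _ _ _ _ L1 (loc2_pos rho w z (Ck_c2d 1 O rho w z Hrho Hw) Hr)) as L2.
  pose proof (loc2_and _ _ _ _ L2 L4) as L3.
  destruct L3 as [d Hd].
  assert (Hz : forall x y, Rabs (x - w) < d -> Rabs (y - z) < d -> rho x y + P (rho x y) / c ^ 2 = 0).
  { intros x y Hx Hy. destruct (Hd x y Hx Hy) as [[[Ox O1x] rx] Vx].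
    destruct (Req_dec (rho x y + P (rho x y) / c ^ 2) 0) as [E|E]; auto. exfalso. apply Vx.
    rewrite <- (HOm0 x y O1x).
    apply (V_ii c P u O O1 O2 rho Om F A Pi x y Hc HP Hu HO HO1 HOU Hrho HF1 HA1 HPi1 HD HOm1 Hvac Hf Ox rx E). }
  assert (Hline : forall (g : R -> R) a b,
     (forall t, Rmin a b <= t <= Rmax a b -> continuity_pt g t /\ 0 < g t /\ g t + P (g t) / c ^ 2 = 0) ->
     u (g a) = u (g b)).
  { intros g a b Hg. destruct (Rle_dec a b) as [Hab|Hab].
    - symmetry. apply (line_const c P u g a b Hu Hab). intros t Ht. apply Hg.
      unfold Rmin, Rmax. destruct (Rle_dec a b); [exact Ht|contradiction].
    - apply (line_const c P u g b a Hu). lra. intros t Ht. apply Hg.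
      unfold Rmin, Rmax. destruct (Rle_dec a b); [contradiction|exact Ht]. }
  assert (Hconst : forall x y, Rabs (x - w) < d -> Rabs (y - z) < d -> u (rho x y) = u (rho w z)).
  { intros x y Hx Hy. transitivity (u (rho w y)).
    - symmetry. apply (Hline (fun t => rho t y) w x). intros t Ht.
      assert (Htw : Rabs (t - w) < d) by (eapply Rle_lt_trans; [apply Rabs_between; exact Ht| exact Hx]).
      destruct (Hd t y Htw Hy) as [[[Ot _] rt] _]. split; [|split; auto].
      apply continuity_pt_filterlim.
      exact (ex_derive_continuous _ _ (proj1 (Ck_ex _ _ _ _ _ Hrho Ot))).
    - symmetry. apply (Hline (fun t => rho w t) z y). intros t Ht.
      assert (Htz : Rabs (t - z) < d) by (eapply Rle_lt_trans; [apply Rabs_between; exact Ht| exact Hy]).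
      assert (Hww : Rabs (w - w) < d) by (rewrite Rminus_diag, Rabs_R0; apply cond_pos).
      destruct (Hd w t Hww Htz) as [[[Ot _] rt] _]. split; [|split; auto].
      apply continuity_pt_filterlim.
      exact (ex_derive_continuous _ _ (proj2 (Ck_ex _ _ _ _ _ Hrho Ot))). }
  assert (HlnC : forall x y, Rabs (x - w) < d -> Rabs (y - z) < d ->
     - (u (rho w z) / c ^ 2) + C = / 2 * ln (D0 x y)).
  { intros x y Hx Hy. destruct (Hd x y Hx Hy) as [[[Ox O1x] rx] _].
    rewrite <- (Hconst x y Hx Hy). rewrite <- (HC x y Ox rx). unfold calD, D0. rewrite (HOm0 x y O1x). reflexivity. }
  assert (Hfirst : forall x y, Rabs (x - w) < d -> Rabs (y - z) < d ->
     DwA c (exp (2 * F x y)) (exp (- (2 * F x y))) Om0 (A x y) (Pi x y) (dw F x y) (dw A x y) (dw Pi x y) = 0 /\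
     DwA c (exp (2 * F x y)) (exp (- (2 * F x y))) Om0 (A x y) (Pi x y) (dz F x y) (dz A x y) (dz Pi x y) = 0).
  { intros x y Hx Hy. destruct (Hd x y Hx Hy) as [[[Ox O1x] rx] _].
    pose proof (HD0 x y Ox O1x) as Dpos.
    destruct (Ck_ex _ _ _ _ _ HF1 Ox) as [Ef1 Ef2].
    destruct (Ck_ex _ _ _ _ _ HA1 Ox) as [Ea1 Ea2].
    destruct (Ck_ex _ _ _ _ _ HPi1 Ox) as [Ep1 Ep2].
    destruct (box_open w z d x y Hx Hy) as [Lx Ly].
    split.
    - pose proof (dlnD c Om0 (fun s => F s y) (fun s => A s y) (fun s => Pi s y) x Hc0 Ef1 Ea1 Ep1 Dpos) as D1.
      assert (D2 : is_derive (fun s => / 2 * ln (exp (2 * F s y) * (1 + Om0 / c * A s y) ^ 2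
                 - exp (- (2 * F s y)) * (Om0 ^ 2 / c ^ 2) * Pi s y ^ 2)) x 0).
      { apply (is_derive_ext_loc (fun _ => - (u (rho w z) / c ^ 2) + C)).
        - eapply filter_imp; [|exact Lx]. intros x' [Hx' Hy']. apply (HlnC x' y Hx' Hy').
        - apply (is_derive_const (K := R_AbsRing) (V := R_NormedModule)). }
      pose proof (eq_trans (eq_sym (is_derive_unique _ _ _ D1)) (is_derive_unique _ _ _ D2)) as E.
      change (DwA c (exp (2 * F x y)) (exp (- (2 * F x y))) Om0 (A x y) (Pi x y) (dw F x y) (dw A x y) (dw Pi x y)
        / (2 * D0 x y) = 0) in E.
      unfold Rdiv in E. apply Rmult_integral in E. destruct E as [E|E]; auto.
      exfalso. apply (Rinv_neq_0_compat (2 * D0 x y)); auto. lra.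
    - pose proof (dlnD c Om0 (fun s => F x s) (fun s => A x s) (fun s => Pi x s) y Hc0 Ef2 Ea2 Ep2 Dpos) as D1.
      assert (D2 : is_derive (fun s => / 2 * ln (exp (2 * F x s) * (1 + Om0 / c * A x s) ^ 2
                 - exp (- (2 * F x s)) * (Om0 ^ 2 / c ^ 2) * Pi x s ^ 2)) y 0).
      { apply (is_derive_ext_loc (fun _ => - (u (rho w z) / c ^ 2) + C)).
        - eapply filter_imp; [|exact Ly]. intros y' [Hx' Hy']. apply (HlnC x y' Hx' Hy').
        - apply (is_derive_const (K := R_AbsRing) (V := R_NormedModule)). }
      pose proof (eq_trans (eq_sym (is_derive_unique _ _ _ D1)) (is_derive_unique _ _ _ D2)) as E.
      change (DwA c (exp (2 * F x y)) (exp (- (2 * F x y))) Om0 (A x y) (Pi x y) (dz F x y) (dz A x y) (dz Pi x y)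
        / (2 * D0 x y) = 0) in E.
      unfold Rdiv in E. apply Rmult_integral in E. destruct E as [E|E]; auto.
      exfalso. apply (Rinv_neq_0_compat (2 * D0 x y)); auto. lra. }
  assert (Hww : Rabs (w - w) < d) by (rewrite Rminus_diag, Rabs_R0; apply cond_pos).
  assert (Hzz : Rabs (z - z) < d) by (rewrite Rminus_diag, Rabs_R0; apply cond_pos).
  destruct (box_open w z d w z Hww Hzz) as [Lw Lz].
  destruct (Ck_ex _ _ _ _ _ HF1 Hw) as [Ef1 Ef2].
  destruct (Ck_ex _ _ _ _ _ HA1 Hw) as [Ea1 Ea2].
  destruct (Ck_ex _ _ _ _ _ HPi1 Hw) as [Ep1 Ep2].
  destruct (Ck_ex _ _ _ _ _ (Ck_w _ _ _ HF) Hw) as [Efw1 _].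
  destruct (Ck_ex _ _ _ _ _ (Ck_w _ _ _ HA) Hw) as [Eaw1 _].
  destruct (Ck_ex _ _ _ _ _ (Ck_w _ _ _ HPi) Hw) as [Epw1 _].
  destruct (Ck_ex _ _ _ _ _ (Ck_z _ _ _ HF) Hw) as [_ Efz2].
  destruct (Ck_ex _ _ _ _ _ (Ck_z _ _ _ HA) Hw) as [_ Eaz2].
  destruct (Ck_ex _ _ _ _ _ (Ck_z _ _ _ HPi) Hw) as [_ Epz2].
  assert (S1 : DwwA c (exp (2 * F w z)) (exp (- (2 * F w z))) Om0 (A w z) (Pi w z) (dw F w z) (dw A w z) (dw Pi w z)
     (dw (dw F) w z) (dw (dw A) w z) (dw (dw Pi) w z) = 0).
  { pose proof (dDwA c Om0 (fun s => F s z) (fun s => A s z) (fun s => Pi s z)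
      (fun s => dw F s z) (fun s => dw A s z) (fun s => dw Pi s z) w Hc0 Ef1 Ea1 Ep1 Efw1 Eaw1 Epw1
      eq_refl eq_refl eq_refl) as D1.
    assert (D2 : is_derive (fun s => DwA c (exp (2 * F s z)) (exp (- (2 * F s z))) Om0 (A s z) (Pi s z)
        (dw F s z) (dw A s z) (dw Pi s z)) w 0).
    { apply (is_derive_ext_loc (fun _ => 0)).
      - eapply filter_imp; [|exact Lw]. intros x' [Hx' Hy']. symmetry. apply (Hfirst x' z Hx' Hy').
      - apply (is_derive_const (K := R_AbsRing) (V := R_NormedModule)). }
    exact (eq_trans (eq_sym (is_derive_unique _ _ _ D1)) (is_derive_unique _ _ _ D2)). }
  assert (S2 : DwwA c (exp (2 * F w z)) (exp (- (2 * F w z))) Om0 (A w z) (Pi w z) (dz F w z) (dz A w z) (dz Pi w z)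
     (dz (dz F) w z) (dz (dz A) w z) (dz (dz Pi) w z) = 0).
  { pose proof (dDwA c Om0 (fun s => F w s) (fun s => A w s) (fun s => Pi w s)
      (fun s => dz F w s) (fun s => dz A w s) (fun s => dz Pi w s) z Hc0 Ef2 Ea2 Ep2 Efz2 Eaz2 Epz2
      eq_refl eq_refl eq_refl) as D1.
    assert (D2 : is_derive (fun s => DwA c (exp (2 * F w s)) (exp (- (2 * F w s))) Om0 (A w s) (Pi w s)
        (dz F w s) (dz A w s) (dz Pi w s)) z 0).
    { apply (is_derive_ext_loc (fun _ => 0)).
      - eapply filter_imp; [|exact Lz]. intros y' [Hx' Hy']. symmetry. apply (Hfirst w y' Hx' Hy').
      - apply (is_derive_const (K := R_AbsRing) (V := R_NormedModule)). }
    exact (eq_trans (eq_sym (is_derive_unique _ _ _ D1)) (is_derive_unique _ _ _ D2)). }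
  assert (HM : c ^ 2 * rho w z + P (rho w z) = 0).
  { replace (c ^ 2 * rho w z + P (rho w z)) with (c ^ 2 * (rho w z + P (rho w z) / c ^ 2)) by (field; auto).
    rewrite Hh. ring. }
  destruct (Hfirst w z Hww Hzz) as [F1 F2].
  assert (HQ := sos_alg c (exp (2 * F w z)) (exp (4 * F w z)) (exp (- (2 * F w z))) Om0 (A w z) (Pi w z)
    (dw F w z) (dz F w z) (dw A w z) (dz A w z) (dw Pi w z) (dz Pi w z)
    (dw (dw F) w z) (dz (dz F) w z) (dw (dw A) w z) (dz (dz A) w z) (dw (dw Pi) w z) (dz (dz Pi) w z)
    (16 * PI * G / c ^ 4 * exp (2 * (- F w z + K w z)) * P (rho w z))
    Hc0 (exp_pos _)).
  assert (HPr : P (rho w z) = - (c ^ 2 * rho w z)) by lra.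
  assert (Hneg : 16 * PI * G / c ^ 4 * exp (2 * (- F w z + K w z)) * P (rho w z) < 0).
  { rewrite HPr. assert (0 < c ^ 4) by (apply pow_lt; lra). assert (0 < c ^ 2) by (apply pow_lt; lra).
    pose proof PI_RGT_0. pose proof (exp_pos (2 * (- F w z + K w z))).
    assert (0 < 16 * PI * G / c ^ 4).
    { unfold Rdiv. apply Rmult_lt_0_compat; [|apply Rinv_0_lt_compat; auto]. nra. }
    assert (0 < c ^ 2 * rho w z) by (apply Rmult_lt_0_compat; auto).
    assert (0 < 16 * PI * G / c ^ 4 * exp (2 * (- F w z + K w z)) * (c ^ 2 * rho w z))
      by (apply Rmult_lt_0_compat; [apply Rmult_lt_0_compat|]; auto).
    replace (16 * PI * G / c ^ 4 * exp (2 * (- F w z + K w z)) * - (c ^ 2 * rho w z)) with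
      (- (16 * PI * G / c ^ 4 * exp (2 * (- F w z + K w z)) * (c ^ 2 * rho w z))) by ring.
    lra. }
  apply (Rlt_not_le _ _ Hneg). apply HQ.
  - replace (4 * F w z) with (2 * F w z + 2 * F w z) by ring. rewrite exp_plus. ring.
  - apply exp_Ropp.
  - apply HPi0; auto.
  - apply (HD0 w z Hw H1).
  - eapply eq_trans; [exact (Ha w z Hw)|]. rewrite HM. field. split; auto.
    intro E. pose proof (HD w z Hw) as K0. lra.
  - eapply eq_trans; [exact (Hb w z Hw)|]. rewrite HM. field. split; auto.
    intro E. pose proof (HD w z Hw) as K0. lra.
  - eapply eq_trans; [exact (Hcc w z Hw)|]. ring.
  - exact F1.
  - exact F2.
  - rewrite S1, S2. ring.
Qed.

Lemma dT (c G : R) (P f k r p : R -> R) t :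
  ex_derive f t -> ex_derive k t -> ex_derive r t -> ex_derive p t -> ex_derive P (r t) ->
  is_derive (fun s => 16 * PI * G / c ^ 4 * exp (2 * (- f s + k s)) * P (r s) * p s) t
    (16 * PI * G / c ^ 4 * (exp (2 * (- f t + k t)) * (2 * (- Derive f t + Derive k t)) * P (r t) * p t
       + exp (2 * (- f t + k t)) * (Derive P (r t) * Derive r t) * p t
       + exp (2 * (- f t + k t)) * P (r t) * Derive p t)).
Proof.
  intros. auto_derive.
  - repeat split; auto.
  - etafix. replace (c * (c * (c * (c * 1)))) with (c ^ 4) by ring. ring.
Qed.

Lemma Lap_deriv_w (O : R -> R -> Prop) (Pi T : R -> R -> R) w z :
  Defs.open_set O -> Ck 3 O Pi -> O w z ->
  (forall w z, O w z -> Lap Pi w z = T w z) ->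
  dw (dw (dw Pi)) w z + dw (dz (dz Pi)) w z = Derive (fun x => T x z) w.
Proof.
  intros HO HPi Hw HL.
  assert (E : Derive (fun x => Lap Pi x z) w = Derive (fun x => T x z) w).
  { apply Derive_ext_loc. apply (locally_2d_1d_const_y (fun x y => Lap Pi x y = T x y)).
    destruct (open_loc O w z HO Hw) as [d Hd]. exists d. intros; apply HL; auto. }
  rewrite <- E. unfold Lap. rewrite Derive_plus.
  - reflexivity.
  - exact (proj1 (Ck_ex _ _ _ _ _ (Ck_w _ _ _ (Ck_w _ _ _ HPi)) Hw)).
  - exact (proj1 (Ck_ex _ _ _ _ _ (Ck_z _ _ _ (Ck_z _ _ _ HPi)) Hw)).
Qed.

Lemma Lap_deriv_z (O : R -> R -> Prop) (Pi T : R -> R -> R) w z :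
  Defs.open_set O -> Ck 3 O Pi -> O w z ->
  (forall w z, O w z -> Lap Pi w z = T w z) ->
  dz (dw (dw Pi)) w z + dz (dz (dz Pi)) w z = Derive (fun y => T w y) z.
Proof.
  intros HO HPi Hw HL.
  assert (E : Derive (fun y => Lap Pi w y) z = Derive (fun y => T w y) z).
  { apply Derive_ext_loc. apply (locally_2d_1d_const_x (fun x y => Lap Pi x y = T x y)).
    destruct (open_loc O w z HO Hw) as [d Hd]. exists d. intros; apply HL; auto. }
  rewrite <- E. unfold Lap. rewrite Derive_plus.
  - reflexivity.
  - exact (proj2 (Ck_ex _ _ _ _ _ (Ck_w _ _ _ (Ck_w _ _ _ HPi)) Hw)).
  - exact (proj2 (Ck_ex _ _ _ _ _ (Ck_z _ _ _ (Ck_z _ _ _ HPi)) Hw)).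
Qed.

Theorem proposition5
  (c G : R) (Hc : 0 < c) (HG : 0 < G)
  (* equation of state: P = P(rho), C^1; u = int_0^rho dP/(rho + P/c^2) *)
  (P u : R -> R)
  (HP : forall r, ex_derive P r /\ continuous (Derive P) r)
  (Hu : forall r, 0 < r ->
     is_RInt_gen (fun s => Derive P s / (s + P s / c ^ 2))
                 (at_right 0) (at_point r) (u r))
  (* the domains *)
  (O O1 O2 : R -> R -> Prop)
  (HO : half_plane_domain O)
  (HO1 : plane_domain O1) (HO2 : plane_domain O2)
  (HOU : forall w z, O w z <-> (O1 w z \/ O2 w z))
  (* fields *)
  (rho Om K F A Pi : R -> R -> R)
  (Hrho : Ck 1 O rho) (Hrho0 : forall w z, O w z -> 0 <= rho w z)
  (HK : Ck 1 O K) (HF : Ck 2 O F) (HA : Ck 2 O A) (HPi : Ck 3 O Pi)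
  (HPi0 : forall w z, O w z -> Pi w z <> 0)
  (HgradPi : forall w z, O w z -> dw Pi w z ^ 2 + dz Pi w z ^ 2 <> 0)
  (HD : forall w z, O w z -> 0 < calD c F A Pi Om w z)
  (HOm1 : exists Om0, forall w z, O1 w z -> Om w z = Om0)
  (Hvac : forall w z, O2 w z -> rho w z = 0 /\ P (rho w z) = 0)
  (* (a) *)
  (Ha : forall w z, O w z ->
     Lap F w z
     + / Pi w z * (dw Pi w z * dw F w z + dz Pi w z * dz F w z)
     + exp (4 * F w z) / (2 * Pi w z ^ 2) * (dw A w z ^ 2 + dz A w z ^ 2)
     = 4 * PI * G / c ^ 4 * exp (2 * (- F w z + K w z))
       * ((c ^ 2 * rho w z + P (rho w z))
          * (exp (2 * F w z) * (1 + Om w z / c * A w z) ^ 2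
             + exp (- (2 * F w z)) * (Om w z ^ 2 / c ^ 2) * Pi w z ^ 2)
          / calD c F A Pi Om w z
          + 2 * P (rho w z)))
  (* (b) *)
  (Hb : forall w z, O w z ->
     Lap A w z
     - / Pi w z * (dw Pi w z * dw A w z + dz Pi w z * dz A w z)
     + 4 * (dw F w z * dw A w z + dz F w z * dz A w z)
     = - (16 * PI * G / c ^ 4) * exp (2 * (- F w z + K w z))
       * (c ^ 2 * rho w z + P (rho w z))
       * (exp (- (2 * F w z)) * (Om w z / c) * Pi w z ^ 2
          * (1 + Om w z / c * A w z))
       / calD c F A Pi Om w z)
  (* (c) *)
  (Hc' : forall w z, O w z ->
     Lap Pi w z
     = 16 * PI * G / c ^ 4 * exp (2 * (- F w z + K w z))
       * P (rho w z) * Pi w z)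
  (* (f) *)
  (Hf : exists C, forall w z, O w z -> 0 < rho w z ->
     / 2 * ln (calD c F A Pi Om w z) = - (u (rho w z) / c ^ 2) + C) :
  forall w z, O w z ->
    dz (K1t F A Pi) w z - dw (K3t F A Pi) w z
    = 16 * PI * G / c ^ 4 * exp (2 * (- F w z + K w z))
      * P (rho w z) * Pi w z
      * / (dw Pi w z ^ 2 + dz Pi w z ^ 2)
      * ((dw K w z - K1t F A Pi w z) * dz Pi w z
         - (dz K w z - K3t F A Pi w z) * dw Pi w z).
Proof.
  intros w z Hw.
  destruct HO as [[_ [HOo _]] _].
  destruct HO1 as [_ [HO1o _]].
  assert (Hc0 : c <> 0) by lra.
  assert (HP0 : P 0 = 0).
  { destruct HO2 as [[q1 [q2 Hq]] _]. destruct (Hvac q1 q2 Hq) as [E1 E2]. rewrite E1 in E2. exact E2. }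
  pose proof (Ck_f _ _ _ HF) as HF1. pose proof (Ck_f _ _ _ HA) as HA1.
  pose proof (Ck_f _ _ _ (Ck_f _ _ _ HPi)) as HPi1. pose proof (Ck_f _ _ _ HPi) as HPi2.
  assert (HV : Vexp c P rho F A Pi (Om w z) w z = 0).
  { destruct (Req_dec (rho w z) 0) as [Hr|Hr].
    - apply (V_i c P O rho F A Pi (Om w z) w z HOo Hrho Hrho0 HP0 Hw Hr).
    - assert (Hrp : 0 < rho w z) by (destruct (Hrho0 w z Hw); auto; lra).
      destruct (Req_dec (rho w z + P (rho w z) / c ^ 2) 0) as [Hh|Hh].
      + apply (V_iii c G P u O O1 O2 rho Om K F A Pi w z Hc HG HP Hu HOo HO1o HOU Hrho HF HA HPi2
          HPi0 HD HOm1 Hvac Ha Hb Hc' Hf Hw Hrp Hh).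
      + apply (V_ii c P u O O1 O2 rho Om F A Pi w z Hc HP Hu HOo HO1o HOU Hrho HF1 HA1 HPi1 HD HOm1 Hvac Hf Hw Hrp Hh). }
  assert (SF : dw (dz F) w z = dz (dw F) w z) by (apply (schwarz2 O); auto).
  assert (SA : dw (dz A) w z = dz (dw A) w z) by (apply (schwarz2 O); auto).
  assert (SP : dw (dz Pi) w z = dz (dw Pi) w z) by (apply (schwarz2 O); auto).
  assert (T1 : dw (dz (dw Pi)) w z = dz (dw (dw Pi)) w z).
  { apply (schwarz2 O); auto. apply Ck_w; auto. }
  assert (T2 : dz (dz (dw Pi)) w z = dw (dz (dz Pi)) w z).
  { transitivity (dz (dw (dz Pi)) w z).
    - unfold dz at 1 3. apply Derive_ext_loc.
      apply (locally_2d_1d_const_x (fun x y => dz (dw Pi) x y = dw (dz Pi) x y)).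
      destruct (open_loc O w z HOo Hw) as [d Hd]. exists d. intros x y Hx Hy.
      symmetry. apply (schwarz2 O); auto.
    - symmetry. apply (schwarz2 O); auto. apply Ck_z; auto. }
  destruct (Ck_ex _ _ _ _ _ HPi Hw) as [Xp1 Xp2].
  destruct (Ck_ex _ _ _ _ _ (Ck_w _ _ _ HPi) Hw) as [Xpw1 Xpw2].
  destruct (Ck_ex _ _ _ _ _ (Ck_z _ _ _ HPi) Hw) as [Xpz1 Xpz2].
  destruct (Ck_ex _ _ _ _ _ (Ck_w _ _ _ (Ck_w _ _ _ HPi)) Hw) as [Xpww1 Xpww2].
  destruct (Ck_ex _ _ _ _ _ (Ck_z _ _ _ (Ck_z _ _ _ HPi)) Hw) as [Xpzz1 Xpzz2].
  destruct (Ck_ex _ _ _ _ _ (Ck_z _ _ _ (Ck_w _ _ _ HPi)) Hw) as [Xpwz1 Xpwz2].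
  destruct (Ck_ex _ _ _ _ _ HF Hw) as [Xf1 Xf2].
  destruct (Ck_ex _ _ _ _ _ (Ck_w _ _ _ HF) Hw) as [Xfw1 Xfw2].
  destruct (Ck_ex _ _ _ _ _ (Ck_z _ _ _ HF) Hw) as [Xfz1 Xfz2].
  destruct (Ck_ex _ _ _ _ _ (Ck_w _ _ _ HA) Hw) as [Xaw1 Xaw2].
  destruct (Ck_ex _ _ _ _ _ (Ck_z _ _ _ HA) Hw) as [Xaz1 Xaz2].
  destruct (Ck_ex _ _ _ _ _ HK Hw) as [Xk1 Xk2].
  destruct (Ck_ex _ _ _ _ _ Hrho Hw) as [Xr1 Xr2].
  assert (E1 : dz (K1t F A Pi) w z =
    K1A' (Pi w z) (dw Pi w z) (dz Pi w z) (dw (dw Pi) w z) (dz (dz Pi) w z) (dz (dw Pi) w z)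
      (dw F w z) (dz F w z) (exp (4 * F w z)) (dw A w z) (dz A w z)
      (dz Pi w z) (dz (dw Pi) w z) (dz (dz Pi) w z) (dz (dw (dw Pi)) w z) (dz (dz (dz Pi)) w z)
      (dw (dz (dz Pi)) w z) (dz (dw F) w z) (dz (dz F) w z) (dz F w z) (dz (dw A) w z) (dz (dz A) w z)).
  { rewrite <- T2.
    exact (is_derive_unique _ _ _ (dK1 (fun t => Pi w t) (fun t => dw Pi w t) (fun t => dz Pi w t)
      (fun t => dw (dw Pi) w t) (fun t => dz (dz Pi) w t) (fun t => dz (dw Pi) w t)
      (fun t => F w t) (fun t => dw F w t) (fun t => dz F w t) (fun t => dw A w t) (fun t => dz A w t) z
      Xp2 Xpw2 Xpz2 Xpww2 Xpzz2 Xpwz2 Xf2 Xfw2 Xfz2 Xaw2 Xaz2 (HPi0 w z Hw) (HgradPi w z Hw))). }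
  assert (E3 : dw (K3t F A Pi) w z =
    K3A' (Pi w z) (dw Pi w z) (dz Pi w z) (dw (dw Pi) w z) (dz (dz Pi) w z) (dz (dw Pi) w z)
      (dw F w z) (dz F w z) (exp (4 * F w z)) (dw A w z) (dz A w z)
      (dw Pi w z) (dw (dw Pi) w z) (dw (dz Pi) w z) (dw (dw (dw Pi)) w z) (dw (dz (dz Pi)) w z)
      (dw (dz (dw Pi)) w z) (dw (dw F) w z) (dw (dz F) w z) (dw F w z) (dw (dw A) w z) (dw (dz A) w z)).
  { exact (is_derive_unique _ _ _ (dK3 (fun t => Pi t z) (fun t => dw Pi t z) (fun t => dz Pi t z)
      (fun t => dw (dw Pi) t z) (fun t => dz (dz Pi) t z) (fun t => dz (dw Pi) t z)
      (fun t => F t z) (fun t => dw F t z) (fun t => dz F t z) (fun t => dw A t z) (fun t => dz A t z) w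
      Xp1 Xpw1 Xpz1 Xpww1 Xpzz1 Xpwz1 Xf1 Xfw1 Xfz1 Xaw1 Xaz1 (HPi0 w z Hw) (HgradPi w z Hw))). }
  set (T := fun x y => 16 * PI * G / c ^ 4 * exp (2 * (- F x y + K x y)) * P (rho x y) * Pi x y).
  assert (Hcw : dw (dw (dw Pi)) w z + dw (dz (dz Pi)) w z =
    16 * PI * G / c ^ 4 * (exp (2 * (- F w z + K w z)) * (2 * (- dw F w z + dw K w z)) * P (rho w z) * Pi w z
       + exp (2 * (- F w z + K w z)) * (Derive P (rho w z) * dw rho w z) * Pi w z
       + exp (2 * (- F w z + K w z)) * P (rho w z) * dw Pi w z)).
  { rewrite (Lap_deriv_w O Pi T w z HOo HPi Hw Hc').
    exact (is_derive_unique _ _ _ (dT c G P (fun x => F x z) (fun x => K x z) (fun x => rho x z) (fun x => Pi x z) w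
      Xf1 Xk1 Xr1 Xp1 (proj1 (HP _)))). }
  assert (Hcz : dz (dw (dw Pi)) w z + dz (dz (dz Pi)) w z =
    16 * PI * G / c ^ 4 * (exp (2 * (- F w z + K w z)) * (2 * (- dz F w z + dz K w z)) * P (rho w z) * Pi w z
       + exp (2 * (- F w z + K w z)) * (Derive P (rho w z) * dz rho w z) * Pi w z
       + exp (2 * (- F w z + K w z)) * P (rho w z) * dz Pi w z)).
  { rewrite (Lap_deriv_z O Pi T w z HOo HPi Hw Hc').
    exact (is_derive_unique _ _ _ (dT c G P (fun y => F w y) (fun y => K w y) (fun y => rho w y) (fun y => Pi w y) z
      Xf2 Xk2 Xr2 Xp2 (proj1 (HP _)))). }
  rewrite E1, E3. rewrite T1, SP, SF, SA.
  assert (He4 : exp (4 * F w z) = exp (2 * F w z) ^ 2).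
  { replace (4 * F w z) with (2 * F w z + 2 * F w z) by ring. rewrite exp_plus. ring. }
  exact (main_alg c G (exp (2 * (- F w z + K w z))) (exp (2 * F w z)) (exp (4 * F w z)) (exp (- (2 * F w z)))
    (Om w z) (A w z) (rho w z) (P (rho w z)) (Derive P (rho w z)) (dw rho w z) (dz rho w z) (dw K w z) (dz K w z)
    (Pi w z) (dw Pi w z) (dz Pi w z) (dw (dw Pi) w z) (dz (dw Pi) w z) (dz (dz Pi) w z)
    (dw (dw (dw Pi)) w z) (dz (dw (dw Pi)) w z) (dw (dz (dz Pi)) w z) (dz (dz (dz Pi)) w z)
    (dw F w z) (dz F w z) (dw (dw F) w z) (dz (dw F) w z) (dz (dz F) w z)
    (dw A w z) (dz A w z) (dw (dw A) w z) (dz (dw A) w z) (dz (dz A) w z)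
    Hc0 (Rgt_not_eq _ _ (exp_pos _)) He4 (exp_Ropp _) (HPi0 w z Hw) (HgradPi w z Hw)
    (Rgt_not_eq _ _ (HD w z Hw)) (Ha w z Hw) (Hb w z Hw) (Hc' w z Hw) Hcw Hcz HV).
Qed.
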